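(* Under the setting of the static update law $\hat W=\alpha K_{\mathrm b}\beta(e)B^\top Pe$ with $\alpha>0$, $0<K_{\mathrm b}\in\mathrm S^{n_\beta}$, $\mathscr b:=\inf_{x}\beta(x)^\top K_{\mathrm b}\beta(x)>0$, $|\eta(t)|\le\eta^\star$, $0<P,Q\in\mathrm S^n$ with $Q=-(A^\top P+PA)$, fix $\gamma\in[0,1)$ and let $$\bar r=\sqrt{\frac{\lambda_{\max}(P)}{g(\alpha\mathscr b\gamma,Q,PB)\lambda_{\min}(P)}\cdot\frac{W^\top K_{\mathrm b}^{-1}W+\frac{{\eta^\star}^2}{\mathscr b(1-\gamma)}}{\alpha}},\qquad c_{\mathrm e}=\frac{g(\alpha\mathscr b\gamma,Q,PB)}{\lambda_{\max}(P)}.$$ If $\|e(0)\|\ge\bar r$, then for all $t\ge0$ $$\|e(t)\|\le\sqrt{\bar r^{\,2}+e^{-c_{\mathrm e}t}\Big(\frac{\lambda_{\max}(P)}{\lambda_{\min}(P)}\|e(0)\|^2-\bar r^{\,2}\Big)}.$$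
   Context: Error system: $\dot e=Ae+B(u_{\mathrm{adapt}}+W^\top\beta(e)+\eta)$, $u_{\mathrm{adapt}}=-\hat W^\top\beta(e)$, with $A\in\mathbb R^{n\times n}$ Hurwitz, $B\in\mathbb R^n$, $\beta:\mathbb R^n\to\mathbb R^{n_\beta}$ known satisfying Assumption 1 (a non-decreasing $\alpha_\beta$ with $\|\beta(x)\|\le\alpha_\beta(\|x\|)$), $W\in\mathbb R^{n_\beta}$ unknown constant, $\eta(t)\in\mathbb R$. Closed-loop solutions are assumed to exist on $[0,\infty)$. $g(\phi,Q,v)=\lambda_{\min}(Q+\phi\,vv^\top)$; $\mathrm S^k$: real symmetric $k\times k$ matrices. *)

(* Defs.v *)
From HB Require Import structures.
From mathcomp Require Import all_boot all_order all_algebra.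
From mathcomp Require Import all_classical all_reals all_analysis.
Set Implicit Arguments. Unset Strict Implicit. Unset Printing Implicit Defensive.
Import Order.TTheory GRing.Theory Num.Theory numFieldNormedType.Exports.
Local Open Scope ring_scope.
Local Open Scope classical_set_scope.

Definition dotv (R : ringType) (n : nat) (u v : 'cV[R]_n) : R := (u^T *m v) 0 0.

Definition enorm (R : rcfType) (n : nat) (x : 'cV[R]_n) : R := Num.sqrt (dotv x x).

Definition symmetricmx (R : ringType) (n : nat) (M : 'M[R]_n) : Prop := M^T = M.

Definition posdefmx (R : numDomainType) (n : nat) (M : 'M[R]_n) : Prop :=
  symmetricmx M /\ forall x : 'cV[R]_n, x != 0 -> 0 < dotv x (M *m x).

Definition lambda_min (R : realType) (n : nat) (M : 'M[R]_n) : R :=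
  inf [set a : R | eigenvalue M a].
Definition lambda_max (R : realType) (n : nat) (M : 'M[R]_n) : R :=
  sup [set a : R | eigenvalue M a].

Definition gfun (R : realType) (n : nat) (phi : R) (Q : 'M[R]_n) (v : 'cV[R]_n) : R :=
  lambda_min (Q + phi *: (v *m v^T)).

(* A is Hurwitz: every complex eigenvalue a + i b of A has a < 0.
   (a + i b is an eigenvalue with eigenvector u + i v, (u,v) <> 0, iff
    A u = a u - b v and A v = b u + a v.) *)
Definition hurwitz (R : realType) (n : nat) (A : 'M[R]_n) : Prop :=
  forall (a b : R) (u v : 'cV[R]_n), (u != 0 \/ v != 0) ->
    A *m u = a *: u - b *: v -> A *m v = b *: u + a *: v -> a < 0.

Definition assumption1 (R : realType) (n nb : nat) (beta : 'cV[R]_n -> 'cV[R]_nb) : Prop :=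
  exists alpha_beta : R -> R,
    (forall r s, r <= s -> alpha_beta r <= alpha_beta s) /\
    forall x, enorm (beta x) <= alpha_beta (enorm x).

Definition bconst (R : realType) (n nb : nat) (Kb : 'M[R]_nb)
  (beta : 'cV[R]_n -> 'cV[R]_nb) : R :=
  inf [set dotv (beta x) (Kb *m beta x) | x in [set: 'cV[R]_n]].

(* Main.v *)
Require Import Defs.
From HB Require Import structures.
From mathcomp Require Import all_boot all_order all_algebra.
From mathcomp Require Import all_classical all_reals all_analysis.
From mathcomp Require Import ring lra.
Set Implicit Arguments. Unset Strict Implicit. Unset Printing Implicit Defensive.
Import Order.TTheory GRing.Theory Num.Theory numFieldNormedType.Exports.
Local Open Scope ring_scope.
Local Open Scope classical_set_scope.

Section Alg.
Variable R : realType.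

Lemma dotvE n (u v : 'cV[R]_n) : dotv u v = \sum_i u i 0 * v i 0.
Proof. by rewrite /dotv mxE; apply: eq_bigr => i _; rewrite mxE. Qed.

Lemma dotvC n (u v : 'cV[R]_n) : dotv u v = dotv v u.
Proof. by rewrite !dotvE; apply: eq_bigr => i _; rewrite mulrC. Qed.

Lemma dotvDl n (u w v : 'cV[R]_n) : dotv (u + w) v = dotv u v + dotv w v.
Proof. by rewrite /dotv linearD mulmxDl mxE. Qed.

Lemma dotvDr n (u w v : 'cV[R]_n) : dotv v (u + w) = dotv v u + dotv v w.
Proof. by rewrite /dotv mulmxDr mxE. Qed.

Lemma dotvZl n a (u v : 'cV[R]_n) : dotv (a *: u) v = a * dotv u v.
Proof. by rewrite /dotv linearZ /= -scalemxAl mxE. Qed.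

Lemma dotvZr n a (u v : 'cV[R]_n) : dotv v (a *: u) = a * dotv v u.
Proof. by rewrite /dotv -scalemxAr mxE. Qed.

Lemma dotvNl n (u v : 'cV[R]_n) : dotv (- u) v = - dotv u v.
Proof. by rewrite -scaleN1r dotvZl mulN1r. Qed.

Lemma dotvNr n (u v : 'cV[R]_n) : dotv v (- u) = - dotv v u.
Proof. by rewrite -scaleN1r dotvZr mulN1r. Qed.

Lemma dotvBl n (u w v : 'cV[R]_n) : dotv (u - w) v = dotv u v - dotv w v.
Proof. by rewrite dotvDl dotvNl. Qed.

Lemma dotvBr n (u w v : 'cV[R]_n) : dotv v (u - w) = dotv v u - dotv v w.
Proof. by rewrite dotvDr dotvNr. Qed.

Lemma dotv0r n (u : 'cV[R]_n) : dotv u 0 = 0.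
Proof. by rewrite /dotv mulmx0 mxE. Qed.

Lemma dotv0l n (u : 'cV[R]_n) : dotv 0 u = 0.
Proof. by rewrite dotvC dotv0r. Qed.

Lemma dotv_ge0 n (u : 'cV[R]_n) : 0 <= dotv u u.
Proof. by rewrite dotvE sumr_ge0 // => i _; rewrite -expr2 sqr_ge0. Qed.

Lemma dotv_eq0 n (u : 'cV[R]_n) : dotv u u = 0 -> u = 0.
Proof.
rewrite dotvE => /eqP; rewrite psumr_eq0 => [/allP H|i _]; last by rewrite -expr2 sqr_ge0.
apply/matrixP => i j; rewrite ord1 mxE.
have := H i (mem_index_enum _); rewrite /= -expr2 sqrf_eq0 => /eqP //.
Qed.

Lemma dotv_gt0 n (u : 'cV[R]_n) : u != 0 -> 0 < dotv u u.
Proof.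
move=> u0; rewrite lt_neqAle dotv_ge0 andbT; apply/eqP => /esym /dotv_eq0 /eqP.
by rewrite (negbTE u0).
Qed.

Lemma dotv_mull n (M : 'M[R]_n) (u v : 'cV[R]_n) : dotv (M *m u) v = dotv u (M^T *m v).
Proof. by rewrite /dotv trmx_mul mulmxA. Qed.

Lemma dotv_sym n (M : 'M[R]_n) (u v : 'cV[R]_n) : Defs.symmetricmx M ->
  dotv u (M *m v) = dotv v (M *m u).
Proof. by move=> HM; rewrite dotvC dotv_mull HM. Qed.

Lemma dotv_outer n (v u : 'cV[R]_n) : dotv u ((v *m v^T) *m u) = dotv v u ^+ 2.
Proof.
rewrite -mulmxA [v^T *m u]mx11_scalar mul_mx_scalar dotvZr.
by rewrite -/(dotv v u) [dotv u v]dotvC expr2.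
Qed.

Definition cK {n} (K : 'M[R]_n) : R := \sum_i \sum_j `|K i j|.

Lemma cK_ge0 n (K : 'M[R]_n) : 0 <= cK K.
Proof. by rewrite /cK sumr_ge0 // => i _; rewrite sumr_ge0. Qed.

Lemma coord_le n (x : 'cV[R]_n) i : x i 0 ^+ 2 <= dotv x x.
Proof.
rewrite dotvE (bigD1 i) //= -expr2 lerDl sumr_ge0 // => j _.
by rewrite -expr2 sqr_ge0.
Qed.

Lemma dotv_bound n (K : 'M[R]_n) (x : 'cV[R]_n) : dotv x (K *m x) <= cK K * dotv x x.
Proof.
rewrite dotvE /cK mulr_suml; apply: ler_sum => i _.
rewrite mxE mulr_sumr mulr_suml; apply: ler_sum => j _.
have h1 := coord_le x i; have h2 := coord_le x j.
have h3 : `|x i 0 * x j 0| <= dotv x x.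
  have hD := dotv_ge0 x.
  rewrite -(real_normK (num_real (x i 0))) in h1.
  rewrite -(real_normK (num_real (x j 0))) in h2.
  have := normr_ge0 (x i 0); have := normr_ge0 (x j 0).
  rewrite normrM; nra.
apply: le_trans (ler_norm _) _.
have -> : `|x i 0 * (K i j * x j 0)| = `|K i j| * `|x i 0 * x j 0|.
  by rewrite !normrM; ring.
by apply: ler_wpM2l.
Qed.

Lemma psd_quad n (N : 'M[R]_n) (x : 'cV[R]_n) :
  Defs.symmetricmx N -> (forall z, 0 <= dotv z (N *m z)) ->
  dotv (N *m x) (N *m x) <= (cK N + 1) * dotv x (N *m x).
Proof.
move=> Ns Npsd.
set y := N *m x; set c2 := cK N + 1; set q := dotv x (N *m x).
have c2p : 0 < c2 by rewrite /c2 ltr_pwDr // cK_ge0.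
set t := c2^-1.
have tc : t * c2 = 1 by rewrite mulVf // gt_eqF.
have tp : 0 < t by rewrite invr_gt0.
have H := Npsd (x - t *: y).
rewrite mulmxBr -scalemxAr dotvBl !dotvBr !dotvZl !dotvZr in H.
have e1 : dotv x y = q by [].
have e2 : dotv y (N *m x) = dotv y y by [].
have e3 : dotv x (N *m y) = dotv y y by rewrite dotv_sym.
have hZ := dotv_bound N y.
have hY := dotv_ge0 y.
have hq : 0 <= q := Npsd x.
rewrite e1 e2 e3 in H.
rewrite -/q -/c2.
have hZ' : dotv y (N *m y) <= (c2 - 1) * dotv y y by rewrite /c2 addrK.
set Y := dotv y y in H hZ' hY *; set Z := dotv y (N *m y) in H hZ'.
have h4 : t * (t * Z) <= t * Y - t * t * Y.
  have : t * (t * Z) <= t * (t * ((c2 - 1) * Y)) by rewrite !ler_pM2l.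
  suff -> : t * (t * ((c2 - 1) * Y)) = t * Y - t * t * Y by [].
  have -> : t * (t * ((c2 - 1) * Y)) = (t * c2) * t * Y - t * t * Y by ring.
  by rewrite tc mul1r.
have h5 : t * Y <= q by nra.
have : Y = c2 * (t * Y) by rewrite mulrA [c2 * t]mulrC tc mul1r.
move=> ->; by rewrite ler_pM2l.
Qed.

Lemma ray_min n (M : 'M[R]_n) : (0 < n)%N -> Defs.symmetricmx M ->
  exists m, exists2 x0 : 'cV[R]_n, x0 != 0 &
    M *m x0 = m *: x0 /\ (forall x, m * dotv x x <= dotv x (M *m x)).
Proof.
move=> n0 Ms.
set S := [set dotv x (M *m x) / dotv x x | x in [set x : 'cV[R]_n | x != 0]].
have x1 : (const_mx 1 : 'cV[R]_n) != 0.
  apply/eqP => /matrixP/(_ (Ordinal n0) 0); rewrite !mxE => /eqP.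
  by rewrite oner_eq0.
have Sne : S !=set0 by eexists; exists (const_mx 1).
have Slb : has_lbound S.
  exists (- cK M) => r [x /= x0 <-].
  rewrite ler_pdivlMr ?dotv_gt0 //.
  have := dotv_bound (- M) x.
  have -> : cK (- M) = cK M.
    by rewrite /cK; apply: eq_bigr => i _; apply: eq_bigr => j _; rewrite mxE normrN.
  by rewrite mulNmx dotvNr mulNr lerNl.
set m := inf S.
have Hm x : m * dotv x x <= dotv x (M *m x).
  have [->|x0] := eqVneq x 0; first by rewrite mulmx0 !dotv0r mulr0.
  rewrite -ler_pdivlMr ?dotv_gt0 //.
  by apply: ge_inf => //; exists x.
set N := M - m%:M.
have HN x : dotv x (N *m x) = dotv x (M *m x) - m * dotv x x.
  by rewrite /N mulmxBl mul_scalar_mx dotvBr dotvZr.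
have Nsym : Defs.symmetricmx N.
  by rewrite /Defs.symmetricmx /N linearB /= tr_scalar_mx Ms.
have Npsd z : 0 <= dotv z (N *m z) by rewrite HN subr_ge0.
have Hdet : \det N == 0.
  apply/negPn/negP => Hd.
  have Nu : N \in unitmx by rewrite unitmxE unitfE.
  set Ai := invmx N.
  set c1 := cK (Ai^T *m Ai); set c2 := cK N + 1.
  have c1p : 0 <= c1 := cK_ge0 _.
  have c2p : 0 < c2 by rewrite /c2 ltr_pwDr // cK_ge0.
  have Hx x : dotv x x <= (c1 * c2 + 1) * dotv x (N *m x).
    set y := N *m x.
    have xe : x = Ai *m y by rewrite /y /Ai mulKmx.
    have h1 : dotv x x <= c1 * dotv y y.
      by rewrite {1 2}xe dotv_mull mulmxA; exact: dotv_bound.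
    have h2 : dotv y y <= c2 * dotv x (N *m x) by exact: psd_quad.
    have hq := Npsd x.
    have hy := dotv_ge0 y.
    nra.
  set K := c1 * c2 + 1.
  have Kp : 0 < K by rewrite /K ltr_pwDr // mulr_ge0 // ltW.
  have Kip : 0 < K^-1 by rewrite invr_gt0.
  have [r [x /= x0 <-] Hr] := @inf_adherent R S K^-1 Kip (conj Sne Slb).
  have Dp := dotv_gt0 x0.
  rewrite ltr_pdivrMr // in Hr.
  have := Hx x; rewrite HN -/K.
  have : K * K^-1 = 1 by rewrite mulfV // gt_eqF.
  rewrite -/m in Hr.
  nra.
case/det0P: Hdet => v v0 vN.
exists m, v^T; first by rewrite trmx_eq0.
split => //.
have : N *m v^T = 0 by rewrite -Nsym -trmx_mul vN trmx0.
by rewrite /N mulmxBl mul_scalar_mx => /eqP; rewrite subr_eq0 => /eqP.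
Qed.

Lemma eig_col n (M : 'M[R]_n) a : Defs.symmetricmx M ->
  eigenvalue M a <-> exists2 x : 'cV[R]_n, x != 0 & M *m x = a *: x.
Proof.
move=> Ms; split.
  case/eigenvalueP => v vM v0; exists v^T; first by rewrite trmx_eq0.
  by rewrite -Ms -trmx_mul vM linearZ.
case=> x x0 Mx; apply/eigenvalueP; exists x^T; last by rewrite trmx_eq0.
by rewrite -{1}Ms -trmx_mul Mx linearZ.
Qed.

Lemma lmin_prop n (M : 'M[R]_n) : (0 < n)%N -> Defs.symmetricmx M ->
  exists2 x0 : 'cV[R]_n, x0 != 0 &
    M *m x0 = lambda_min M *: x0 /\
    (forall x, lambda_min M * dotv x x <= dotv x (M *m x)).
Proof.
move=> n0 Ms; have [m [x0 x00 [Mx0 Hm]]] := ray_min n0 Ms.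
suff -> : lambda_min M = m by exists x0.
have mS : [set a : R | eigenvalue M a] m by apply/eig_col => //; exists x0.
have lb : lbound [set a : R | eigenvalue M a] m.
  move=> a /= /(eig_col _ Ms) [x x0' Mx].
  have := Hm x; rewrite Mx dotvZr ler_pM2r //; exact: dotv_gt0.
apply/eqP; rewrite eq_le; apply/andP; split.
  by apply: ge_inf => //; exists m.
by apply: lb_le_inf => //; exists m.
Qed.

Lemma lmax_prop n (M : 'M[R]_n) : (0 < n)%N -> Defs.symmetricmx M ->
  exists2 x0 : 'cV[R]_n, x0 != 0 &
    M *m x0 = lambda_max M *: x0 /\
    (forall x, dotv x (M *m x) <= lambda_max M * dotv x x).
Proof.
move=> n0 Ms.
have Ns : Defs.symmetricmx (- M) by rewrite /Defs.symmetricmx linearN /= Ms.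
have [m [x0 x00 [Mx0 Hm]]] := ray_min n0 Ns.
suff -> : lambda_max M = - m.
  exists x0 => //; split.
    by rewrite scaleNr -Mx0 mulNmx opprK.
  by move=> x; have := Hm x; rewrite mulNmx dotvNr mulNr lerNr.
have mS : [set a : R | eigenvalue M a] (- m).
  apply/eig_col => //; exists x0 => //; by rewrite scaleNr -Mx0 mulNmx opprK.
have ub : ubound [set a : R | eigenvalue M a] (- m).
  move=> a /= /(eig_col _ Ms) [x x0' Mx].
  have := Hm x; rewrite mulNmx Mx dotvNr dotvZr -mulNr ler_pM2r //; last exact: dotv_gt0.
  by rewrite lerNr.
apply/eqP; rewrite eq_le; apply/andP; split.
  by apply: ge_sup => //; exists (- m).
by apply: ub_le_sup => //; exists (- m).
Qed.

End Alg.

Section An.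
Variable R : realType.

Lemma coord_derive n (e : R -> 'cV[R]_n)(t : R) (D : 'cV[R]_n) i :
  is_derive t 1 e D -> is_derive t 1 (fun s => e s i 0) (D i 0).
Proof.
move=> [De Dv].
have Dc := (derivable_mxP e t 1).1 De i 0.
apply: DeriveDef => //.
by have := congr1 (fun M : 'cV[R]_n => M i 0) (derive_mx De); rewrite Dv mxE => ->.
Qed.

Lemma is_derive_sumf n (h : 'I_n -> R -> R) (t : R) (dh : 'I_n -> R) :
  (forall i, is_derive t 1 (h i) (dh i)) ->
  is_derive t 1 (fun s => \sum_i h i s) (\sum_i dh i).
Proof. by move=> H; have := is_derive_sum H; rewrite fct_sumE. Qed.

Lemma is_deriveMf (f g : R -> R) (t df dg : R) :
  is_derive t 1 f df -> is_derive t 1 g dg ->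
  is_derive t 1 (fun s => f s * g s) (f t * dg + g t * df).
Proof. by move=> H1 H2; have := is_deriveM H1 H2. Qed.

Lemma V_derive n (P : 'M[R]_n) (e : R -> 'cV[R]_n)(t : R) (D : 'cV[R]_n) :
  is_derive t 1 e D ->
  is_derive t 1 (fun s => dotv (e s) (P *m e s))
    (dotv D (P *m e t) + dotv (e t) (P *m D)).
Proof.
move=> H.
have -> : (fun s => dotv (e s) (P *m e s)) =
   (fun s => \sum_i (e s i 0 * \sum_j (fun s => P i j * e s j 0) s)).
  by apply/funext => s; rewrite dotvE; apply: eq_bigr => i _; rewrite mxE.
apply: is_derive_eq.
  apply: is_derive_sumf => i.
  apply: is_deriveMf; first exact: coord_derive.
  apply: is_derive_sumf => j.
  apply: is_derive_eq; first by apply: is_deriveMf; try exact: coord_derive; exact: is_derive_cst.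
  reflexivity.
rewrite !dotvE -big_split /=; apply: eq_bigr => i _.
rewrite !mxE; under eq_bigr do rewrite mulr0 addr0. ring.
Qed.
End An.
Section An2.
Variable R : realType.
Lemma cont_sum {T : topologicalType} n (f : 'I_n -> T -> R) x :
  (forall i, {for x, continuous (f i)}) -> {for x, continuous (fun y => \sum_i f i y)}.
Proof.
elim: n f => [|n IH] f H.
  have -> : (fun y => \sum_(i < 0) f i y) = fun=> 0 by apply/funext => y; rewrite big_ord0.
  exact: cst_continuous.
have -> : (fun y => \sum_(i < n.+1) f i y) =
    (fun y => \sum_(i < n) f (widen_ord (leqnSn n) i) y + f ord_max y).
  by apply/funext => y; rewrite big_ord_recr.
apply: continuousD; last exact: H.
by apply: IH => i; exact: H.
Qed.

Lemma deriv_cont (f : R -> R) (x df : R) : is_derive x 1 f df -> {for x, continuous f}.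
Proof. by move=> [H _]; apply/differentiable_continuous/derivable1_diffP. Qed.

Lemma exp_derive (ce s : R) : is_derive s 1 (fun s => expR (ce * s)) (expR (ce * s) * ce).
Proof.
have := @is_derive1_comp R expR (fun s => ce * s) s (expR (ce * s)) ce.
apply => //.
have H := is_deriveMf (is_derive_cst ce s 1) (is_derive_id s 1).
by rewrite /= mulr1 mulr0 addr0 in H.
Qed.

Lemma h_cont n (P : 'M[R]_n) (e : R -> 'cV[R]_n) (ce Kc t : R) :
  {within [set s | 0 <= s], continuous e} ->
  {within `[0, t], continuous (fun s => expR (ce * s) * (dotv (e s) (P *m e s) - Kc))}.
Proof.
move=> He.
have He' : {within `[0, t], continuous e}.
  apply: continuous_subspaceW He => s /=; rewrite in_itv /= => /andP[] //.
have ec i : {within `[0, t], continuous (fun s => e s i 0)}.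
  by move=> x; exact: (continuous_comp (He' x) (@coord_continuous R n 1 i 0 _)).
have -> : (fun s => expR (ce * s) * (dotv (e s) (P *m e s) - Kc)) =
   (fun s => expR (ce * s) * ((\sum_i (e s i 0 * \sum_j P i j * e s j 0)) - Kc)).
  by apply/funext => s; rewrite dotvE; congr (_ * (_ - _)); apply: eq_bigr => i _; rewrite mxE.
move=> x.
pose T := subspace `[0, t].
have cM (f g : T -> R) y : {for y, continuous f} -> {for y, continuous g} ->
    {for y, continuous (fun z => f z * g z)} by move=> *; apply: continuousM.
apply: (cM (fun s => expR (ce * s))).
  apply: (continuous_subspaceT (A := `[0, t]) (f := fun s => expR (ce * s))) => y.
  exact: deriv_cont (exp_derive ce y).
apply: (continuousD (f := fun s : T => \sum_i (e s i 0 * \sum_j P i j * e s j 0))); last exact: cst_continuous.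
apply: (cont_sum (T := T)) => i; apply: (cM (fun s => e s i 0)); first exact: ec.
apply: (cont_sum (T := T)) => j; apply: (cM (fun=> P i j)); first exact: cst_continuous.
exact: ec.
Qed.
End An2.
Section An3.
Variable R : realType.
Lemma is_deriveBc (V : R -> R) (x dv Kc : R) : is_derive x 1 V dv ->
  is_derive x 1 (fun s => V s - Kc) dv.
Proof. by move=> H; have := is_deriveB H (is_derive_cst Kc x 1); rewrite subr0. Qed.

Lemma comparison (V dV : R -> R) (ce Kc t : R) : 0 <= t ->
  {within `[0, t], continuous (fun s => expR (ce * s) * (V s - Kc))} ->
  (forall s : R, 0 < s -> is_derive s 1 V (dV s)) ->
  (forall s : R, 0 < s -> dV s <= - ce * V s + ce * Kc) ->
  V t <= Kc + expR (- ce * t) * (V 0 - Kc).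
Proof.
move=> t0 hc HV HdV.
set h := fun s => expR (ce * s) * (V s - Kc).
have hd (s : R) : 0 < s -> is_derive s 1 h (expR (ce * s) * dV s + (V s - Kc) * (expR (ce * s) * ce)).
  move=> s0; apply: is_deriveMf; first exact: exp_derive.
  by apply: is_deriveBc; exact: HV.
have Hdf : forall x, x \in `]0, t[%R -> derivable h x 1.
  by move=> x; rewrite in_itv /= => /andP[x0 _]; have [] := hd x x0.
have Hle : forall x, x \in `]0, t[%R -> h^`() x <= 0.
  move=> x; rewrite in_itv /= => /andP[x0 _].
  rewrite derive1E; have [_ ->] := hd x x0.
  have := HdV x x0; have := expR_gt0 (ce * x); nra.
have Hh := @ler0_derive1_le_cc R h 0 t Hdf Hle hc.
have it : t \in `[0, t]%R by rewrite in_itv /= t0 lexx.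
have i0 : (0:R) \in `[0, t]%R by rewrite in_itv /= lexx t0.
have := Hh t 0 it i0 t0.
rewrite /h mulr0 expR0 mul1r => H.
have ep := expR_gt0 (ce * t).
have einv : expR (- ce * t) * expR (ce * t) = 1.
  by rewrite mulNr expRN mulVf // gt_eqF.
have ep' := expR_gt0 (- ce * t).
rewrite -lerBlDl.
have := ler_wpM2l (ltW ep') H.
by rewrite mulrA einv mul1r.
Qed.
End An3.

Lemma pd_psd (R : realType) n (K : 'M[R]_n) : posdefmx K -> forall x, 0 <= dotv x (K *m x).
Proof.
move=> [_ HK] x; have [->|x0] := eqVneq x 0; first by rewrite mulmx0 dotv0r.
exact/ltW/HK.
Qed.

Lemma pd_unit (R : realType) n (K : 'M[R]_n) : posdefmx K -> K \in unitmx.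
Proof.
move=> [Ks HK]; rewrite unitmxE unitfE; apply/negP => /det0P [v v0 vK].
have x0 : v^T != 0 by rewrite trmx_eq0.
have := HK _ x0.
have -> : K *m v^T = 0 by rewrite -Ks -trmx_mul vK trmx0.
by rewrite dotv0r ltxx.
Qed.

Lemma final_ineq (R : realFieldType) (qe sB b w et al bb phi k wK es2 g Vc ce eK : R) :
 2*sB*w <= al*sB^+2*b + wK/al ->
 2*sB*et <= k*sB^+2 + eK ->
 al*sB^+2*bb <= al*sB^+2*b ->
 g*es2 <= qe + phi*sB^+2 ->
 k*sB^+2 = al*bb*sB^+2 - phi*sB^+2 ->
 ce*Vc <= g*es2 ->
 -qe + 2*sB*(-al*sB*b + w + et) <= -(ce*Vc) + (wK/al + eK).
Proof.
move=> h1 h2 h3 h4 h5 h6.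
have -> : -qe + 2*sB*(-al*sB*b + w + et) = -qe - 2*(al*sB^+2*b) + 2*sB*w + 2*sB*et by ring.
have h3' : al*bb*sB^+2 <= al*sB^+2*b by rewrite mulrAC.
rewrite h5 in h2.
lra.
Qed.

Unset Implicit Arguments.
Theorem mainTheorem5 (R : realType) (n nb : nat)
  (A : 'M[R]_n) (B : 'cV[R]_n) (beta : 'cV[R]_n -> 'cV[R]_nb) (W : 'cV[R]_nb)
  (alpha : R) (Kb : 'M[R]_nb) (etastar : R) (P Q : 'M[R]_n) (gamma : R)
  (eta : R -> R) (e : R -> 'cV[R]_n) :
  hurwitz A ->
  assumption1 beta ->
  0 < alpha ->
  posdefmx Kb ->
  0 < bconst Kb beta ->
  posdefmx P -> posdefmx Q ->
  Q = - (A^T *m P + P *m A) ->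
  0 <= gamma < 1 ->
  (forall t, 0 <= t -> `|eta t| <= etastar) ->
  {within [set t : R | 0 <= t], continuous e} ->
  (forall t, 0 < t ->
     let What := (alpha * dotv B (P *m e t)) *: (Kb *m beta (e t)) in
     let uadapt := - dotv What (beta (e t)) in
     is_derive t 1 e
       (A *m e t + (uadapt + dotv W (beta (e t)) + eta t) *: B)) ->
  let g := gfun (alpha * bconst Kb beta * gamma) Q (P *m B) in
  let rbar := Num.sqrt ((lambda_max P / (g * lambda_min P)) *
       ((dotv W (invmx Kb *m W) + etastar ^+ 2 / (bconst Kb beta * (1 - gamma)))
        / alpha)) in
  let ce := g / lambda_max P in
  enorm (e 0) >= rbar ->
  forall t, 0 <= t ->
    enorm (e t) <= Num.sqrt (rbar ^+ 2 + expR (- ce * t) *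
        (lambda_max P / lambda_min P * enorm (e 0) ^+ 2 - rbar ^+ 2)).
Proof.
move=> _ _ a0 Kbpd b0 Ppd Qpd HQ /andP[g0 g1] Heta Hcont Hder g rbar ce _ t t0.
have [n0|nn] := posnP n.
  subst n; rewrite /enorm dotvE big_ord0 sqrtr0; exact: sqrtr_ge0.
have Ps := Ppd.1; have Qs := Qpd.1; have Kbs := Kbpd.1.
set lmin := lambda_min P; set lmax := lambda_max P.
have [xP xP0 [PxP HPmin]] := lmin_prop nn Ps.
have [_ _ [_ HPmax]] := lmax_prop nn Ps.
have DxP := dotv_gt0 xP0.
have lminp : 0 < lmin.
  have := Ppd.2 _ xP0; rewrite PxP dotvZr -/lmin => H.
  by rewrite -(pmulr_lgt0 _ DxP).
have lmaxp : 0 < lmax.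
  have := HPmax xP; rewrite PxP dotvZr -/lmin -/lmax => H.
  by apply: lt_le_trans lminp _; rewrite -(ler_pM2r DxP).
set bb := bconst Kb beta.
set phi := alpha * bb * gamma.
have phi0 : 0 <= phi by rewrite /phi !mulr_ge0 // ltW.
set G := Q + phi *: ((P *m B) *m (P *m B)^T).
have Gs : Defs.symmetricmx G.
  by rewrite /Defs.symmetricmx /G linearD linearZ /= trmx_mul trmxK Qs.
have GE x : dotv x (G *m x) = dotv x (Q *m x) + phi * dotv (P *m B) x ^+ 2.
  by rewrite /G mulmxDl dotvDr -scalemxAl dotvZr dotv_outer.
have [xG xG0 [GxG HGmin]] := lmin_prop nn Gs.
have gE : g = lambda_min G by [].
rewrite -gE in GxG HGmin.
have gp : 0 < g.
  have := GE xG; rewrite GxG dotvZr => H.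
  have h1 := Qpd.2 _ xG0; have h2 := dotv_gt0 xG0.
  have h3 : 0 <= phi * dotv (P *m B) xG ^+ 2 by rewrite mulr_ge0 // sqr_ge0.
  by rewrite -(pmulr_lgt0 _ h2) H; apply: ltr_wpDr.
have Kbu := pd_unit Kbpd.
set Ki := invmx Kb.
set wK := dotv W (Ki *m W).
have KKi : Kb *m (Ki *m W) = W by rewrite /Ki mulKVmx.
have wK0 : 0 <= wK.
  by rewrite /wK -{1}KKi dotvC; exact: pd_psd.
have Hb x : bb <= dotv (beta x) (Kb *m beta x).
  apply: ge_inf; last by exists x.
  by exists 0 => _ [y _ <-]; exact: pd_psd.
set Mc := wK + etastar ^+ 2 / (bb * (1 - gamma)).
have g1' : 0 < 1 - gamma by rewrite subr_gt0.
have Mc0 : 0 <= Mc.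
  by rewrite /Mc addr_ge0 // divr_ge0 ?sqr_ge0 // mulr_ge0 // ltW.
have rbar2 : rbar ^+ 2 = lmax / (g * lmin) * (Mc / alpha).
  have hpos : 0 <= lmax / (g * lmin) * (Mc / alpha).
    apply: mulr_ge0; apply: divr_ge0 => //; try exact: ltW.
    by apply/ltW/mulr_gt0.
  by rewrite /rbar (sqr_sqrtr hpos).
set Kc := lmin * rbar ^+ 2.
have ceKc : ce * Kc = Mc / alpha.
  rewrite /Kc rbar2 /ce -/lmax. field.
  by rewrite !gt_eqF.
have cep : 0 < ce by rewrite /ce divr_gt0.
set Vf := fun s => dotv (e s) (P *m e s).
pose Dv (s : R) := A *m e s + (- dotv ((alpha * dotv B (P *m e s)) *: (Kb *m beta (e s))) (beta (e s))
   + dotv W (beta (e s)) + eta s) *: B.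
pose dV (s : R) := dotv (Dv s) (P *m e s) + dotv (e s) (P *m Dv s).
have HV (s : R) : 0 < s -> is_derive s 1 Vf (dV s).
  by move=> s0; apply: V_derive; exact: (Hder s s0).
have HdV (s : R) : 0 < s -> dV s <= - ce * Vf s + ce * Kc.
  move=> s0.
  set es := e s; set bs := beta es.
  set sB := dotv B (P *m es); set b := dotv bs (Kb *m bs); set w := dotv W bs.
  set qe := dotv es (Q *m es).
  have E1 : dV s = - qe + 2 * sB * (- alpha * sB * b + w + eta s).
    have -> : dV s = 2 * dotv es (P *m Dv s).
      by rewrite /dV -(dotv_sym es (Dv s) Ps) -/es; ring.
    rewrite /Dv -/es -/bs -/sB.
    rewrite mulmxDr -scalemxAr dotvDr dotvZr.
    have -> : dotv es (P *m B) = sB by rewrite /sB (dotv_sym _ _ Ps).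
    have h1 : dotv es ((A^T *m P) *m es) = dotv es (P *m (A *m es)).
      by rewrite -mulmxA -dotv_mull (dotv_sym _ _ Ps).
    have -> : dotv es (P *m (A *m es)) = - qe / 2.
      by rewrite /qe HQ mulNmx mulmxDl dotvNr dotvDr h1 -mulmxA; field.
    rewrite dotvZl -/w [dotv (Kb *m bs) bs]dotvC -/b.
    by field.
  have F1 : 0 <= alpha ^+ 2 * sB ^+ 2 * b - 2 * alpha * sB * w + wK.
    set u := (alpha * sB) *: bs - Ki *m W.
    have := pd_psd Kbpd u.
    rewrite /u mulmxBr KKi -scalemxAr dotvBl !dotvBr !dotvZl !dotvZr -/b.
    rewrite [dotv bs W]dotvC -/w [dotv (Ki *m W) W]dotvC -/wK.
    rewrite (dotv_sym _ _ Kbs) KKi [dotv bs W]dotvC -/w.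
    move=> H; apply: le_trans H _; rewrite le_eqVlt; apply/orP; left; apply/eqP; ring.
  have F2 : bb <= b := Hb es.
  have F3 : g * dotv es es <= qe + phi * sB ^+ 2.
    have := HGmin es; rewrite GE -/qe.
    suff -> : dotv (P *m B) es = sB by [].
    by rewrite dotv_mull (Ps : P^T = P).
  have F4 : Vf s <= lmax * dotv es es := HPmax es.
  have F5 : eta s ^+ 2 <= etastar ^+ 2.
    have := Heta s (ltW s0) => H.
    rewrite -(real_normK (num_real (eta s))).
    by rewrite lerXn2r // ?nnegrE // (le_trans _ H).
  set k := alpha * (1 - gamma) * bb.
  have kp : 0 < k by rewrite /k !mulr_gt0.
  have I1 : 2 * sB * w <= alpha * sB ^+ 2 * b + wK / alpha.
    have aa : alpha * (wK / alpha) = wK by field; rewrite gt_eqF.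
    rewrite -(ler_pM2l a0) mulrDr aa.
    move: F1; nra.
  have I2 : 2 * sB * eta s <= k * sB ^+ 2 + etastar ^+ 2 / k.
    have : 0 <= (k * sB - eta s) ^+ 2 by rewrite sqr_ge0.
    move=> H.
    have kk : k * (etastar ^+ 2 / k) = etastar ^+ 2 by field; rewrite gt_eqF.
    rewrite -(ler_pM2l kp) mulrDr kk.
    nra.
  have I3 : alpha * sB ^+ 2 * bb <= alpha * sB ^+ 2 * b.
    by apply: ler_wpM2l => //; rewrite mulr_ge0 ?sqr_ge0 // ltW.
  have M1 : Mc / alpha = wK / alpha + etastar ^+ 2 / k.
    by rewrite /Mc /k; field; rewrite !gt_eqF.
  have K1 : k * sB ^+ 2 = alpha * bb * sB ^+ 2 - phi * sB ^+ 2.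
    by rewrite /k /phi; ring.
  have I4 : ce * Vf s <= g * dotv es es.
    have -> : g = ce * lmax by rewrite /ce -/lmax mulfVK // gt_eqF.
    by rewrite -mulrA ler_pM2l.
  rewrite mulNr E1 ceKc M1.
  exact: (final_ineq I1 I2 I3 F3 K1 I4).
have HC := @comparison R Vf dV ce Kc t t0 (h_cont (P := P) (ce := ce) (Kc := Kc) (t := t) Hcont) HV HdV.
have -> : enorm (e 0) ^+ 2 = dotv (e 0) (e 0) by rewrite /enorm sqr_sqrtr // dotv_ge0.
rewrite /enorm; apply: ler_wsqrtr.
have Ht := HPmin (e t); have H0 := HPmax (e 0).
set E := expR (- ce * t).
have Ep : 0 < E := expR_gt0 _.
rewrite -(ler_pM2l lminp).
have -> : lmin * (rbar ^+ 2 + E * (lmax / lmin * dotv (e 0) (e 0) - rbar ^+ 2)) =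
    Kc + E * (lmax * dotv (e 0) (e 0) - Kc).
  by rewrite /Kc; field; rewrite gt_eqF.
apply: (le_trans Ht); apply: (le_trans HC); rewrite lerD2l.
by apply: ler_wpM2l; [exact: ltW | rewrite lerD2r].
Qed.
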